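(* Let $\{x^k\}$ be generated by the MPG algorithm described in the context. Then for every $j=1,\ldots,m$ the sequence $\{F_j(x^k)\}$ is non-increasing, i.e., $F(x^{k+1})\preceq F(x^k)$ for every $k$ for which $x^{k+1}$ is generated.
   Context: Let $F:\mathbb{R}^n\to(\mathbb{R}\cup\{+\infty\})^m$, $F=(F_1,\ldots,F_m)$, with $F_j=G_j+H_j$ for $j=1,\ldots,m$, where: (i) each $G_j:\mathbb{R}^n\to\mathbb{R}$ is continuously differentiable and convex; (ii) each $H_j:\mathbb{R}^n\to\mathbb{R}\cup\{+\infty\}$ is proper, convex and continuous on its domain; (iii) $\mathrm{dom}(F):=\{x: F_j(x)<+\infty\ \forall j\}$ is nonempty and closed. For $u,v\in\mathbb{R}^m$, $u\preceq v$ means $u_j\le v_j$ for all $j$. For $x\in\mathrm{dom}(F)$ and $\alpha>0$ define $\psi_x(u):=\max_{j=1,\ldots,m}\big(\nabla G_j(x)^\top(u-x)+H_j(u)-H_j(x)\big)$, $p_\alpha(x):=\arg\min_{u\in\mathbb{R}^n}\psi_x(u)+\frac{1}{2\alpha}\|u-x\|^2$ (unique minimizer), and $\theta_\alpha(x):=\psi_x(p_\alpha(x))+\frac{1}{2\alpha}\|p_\alpha(x)-x\|^2$. MPG algorithm. Step 0: choose $x^0\in\mathrm{dom}(F)$, $\alpha>0$, $\gamma\in(0,2/\alpha)$, $0<\tau_1<\tau_2<1$; set $k=0$. Step 1: compute $p^k:=p_\alpha(x^k)$ and $\theta_\alpha(x^k)$. Step 2: if $\theta_\alpha(x^k)=0$,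 stop. Step 3: set $d^k:=p^k-x^k$, take $j_k^*\in\arg\max_{j}\nabla G_j(x^k)^\top d^k$, set $t=1$. Step 3.1: if $G_{j_k^*}(x^k+td^k)\le G_{j_k^*}(x^k)+t\nabla G_{j_k^*}(x^k)^\top d^k+t\frac{\gamma}{2}\|d^k\|^2$, go to Step 3.2; otherwise replace $t$ by some value in $[\tau_1 t,\tau_2 t]$ and repeat Step 3.1. Step 3.2: if $F(x^k+td^k)\preceq F(x^k)$, set $t_k=t$ and go to Step 4. Step 3.3: replace $t$ by some value in $[\tau_1 t,\tau_2 t]$; if $G_j(x^k+td^k)\le G_j(x^k)+t\nabla G_j(x^k)^\top d^k+t\frac{\gamma}{2}\|d^k\|^2$ for all $j=1,\ldots,m$, set $t_k=t$ and go to Step 4; otherwise repeat Step 3.3. Step 4: $x^{k+1}:=x^k+t_kd^k$, $k\leftarrow k+1$, go to Step 1. *)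

(* Defs.v *)
From HB Require Import structures.
From mathcomp Require Import all_boot all_order all_algebra.
From mathcomp Require Import all_classical all_reals all_analysis.
Set Implicit Arguments. Unset Strict Implicit. Unset Printing Implicit Defensive.
Import Order.TTheory GRing.Theory Num.Theory.
Import numFieldNormedType.Exports.
Local Open Scope classical_set_scope.
Local Open Scope ring_scope.

Section MPG.
Variable R : realType.
Variables n m : nat.

Definition dotv (u v : 'rV[R]_n) : R := (u *m v^T) 0 0.
Definition norm2 (v : 'rV[R]_n) : R := dotv v v.

Definition convex_fun (f : 'rV[R]_n -> R) : Prop :=
  forall x y (t : R), 0 <= t <= 1 ->
    f (t *: x + (1 - t) *: y) <= t * f x + (1 - t) * f y.

Definition convex_efun (f : 'rV[R]_n -> \bar R) : Prop :=
  forall x y (t : R), 0 <= t <= 1 ->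
    (f (t *: x + (1 - t) *: y)%R <= t%:E * f x + (1 - t)%:E * f y)%E.

Definition proper_efun (f : 'rV[R]_n -> \bar R) : Prop :=
  (forall x, f x != -oo%E) /\ exists x, (f x < +oo)%E.

Definition edom (f : 'rV[R]_n -> \bar R) : set 'rV[R]_n := [set x | (f x < +oo)%E].

Variables (G : 'I_m -> 'rV[R]_n -> R) (gradG : 'I_m -> 'rV[R]_n -> 'rV[R]_n)
          (H : 'I_m -> 'rV[R]_n -> \bar R).

Definition Fj (j : 'I_m) (x : 'rV[R]_n) : \bar R := ((G j x)%:E + H j x)%E.

Definition domF : set 'rV[R]_n := [set x | forall j, (Fj j x < +oo)%E].

Definition Fle (u v : 'rV[R]_n) : Prop := forall j, (Fj j u <= Fj j v)%E.

Definition psi (x u : 'rV[R]_n) : \bar R :=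
  (\big[Order.max/-oo]_(j < m) ((dotv (gradG j x) (u - x))%R%:E + H j u - H j x))%E.

Definition prox_obj (alpha : R) (x u : 'rV[R]_n) : \bar R :=
  (psi x u + (1 / (2 * alpha) * norm2 (u - x))%R%:E)%E.

Definition is_prox (alpha : R) (x p : 'rV[R]_n) : Prop :=
  forall u, (prox_obj alpha x p <= prox_obj alpha x u)%E.

(* theta_alpha(x), given p = p_alpha(x) *)
Definition theta (alpha : R) (x p : 'rV[R]_n) : \bar R := prox_obj alpha x p.

Variables (gamma tau1 tau2 : R).

Definition armijo (j : 'I_m) (x d : 'rV[R]_n) (t : R) : Prop :=
  G j (x + t *: d) <= G j x + t * dotv (gradG j x) d + t * (gamma / 2) * norm2 d.

(* Step 3.3 loop, started from current t; result tk *)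
Inductive ls33 (x d : 'rV[R]_n) : R -> R -> Prop :=
| ls33_stop t t' : tau1 * t <= t' <= tau2 * t -> (forall j, armijo j x d t') ->
    ls33 x d t t'
| ls33_cont t t' tk : tau1 * t <= t' <= tau2 * t -> ~ (forall j, armijo j x d t') ->
    ls33 x d t' tk -> ls33 x d t tk.

(* Step 3.2 at current t; result tk *)
Definition ls32 (x d : 'rV[R]_n) (t tk : R) : Prop :=
  (Fle (x + t *: d) x /\ tk = t) \/ (~ Fle (x + t *: d) x /\ ls33 x d t tk).

(* Step 3.1 loop with index js at current t; result tk *)
Inductive ls31 (js : 'I_m) (x d : 'rV[R]_n) : R -> R -> Prop :=
| ls31_ok t tk : armijo js x d t -> ls32 x d t tk -> ls31 js x d t tk
| ls31_back t t' tk : ~ armijo js x d t -> tau1 * t <= t' <= tau2 * t ->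
    ls31 js x d t' tk -> ls31 js x d t tk.

(* One iteration of MPG (Steps 1-4) from x producing x', when the algorithm
   does not stop at Step 2. *)
Definition mpg_step (alpha : R) (x x' : 'rV[R]_n) : Prop :=
  exists p, is_prox alpha x p /\ theta alpha x p != 0%E /\
  let d := p - x in
  exists js : 'I_m, (forall j, dotv (gradG j x) d <= dotv (gradG js x) d) /\
  exists tk, ls31 js x d 1 tk /\ x' = x + tk *: d.

Definition mpg_generated (alpha : R) (x : nat -> 'rV[R]_n) (K : nat) : Prop :=
  domF (x 0%N) /\ forall k, (k < K)%N -> mpg_step alpha (x k) (x k.+1).

End MPG.

(* Main.v *)
Require Import Defs.
From HB Require Import structures.
From mathcomp Require Import all_boot all_order all_algebra.
From mathcomp Require Import all_classical all_reals all_analysis.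
From mathcomp Require Import ring lra.
Import Order.TTheory GRing.Theory Num.Theory.
Import numFieldNormedType.Exports.
Local Open Scope classical_set_scope.
Local Open Scope ring_scope.

Lemma dotvZ (R : realType) n (g v : 'rV[R]_n) (k : R) : dotv g (k *: v) = k * dotv g v.
Proof.
rewrite /dotv !mxE mulr_sumr; apply: eq_bigr => i _; rewrite !mxE; ring.
Qed.

Lemma norm2Z (R : realType) n (v : 'rV[R]_n) (k : R) : norm2 (k *: v) = k ^+ 2 * norm2 v.
Proof.
rewrite /norm2 /dotv !mxE mulr_sumr; apply: eq_bigr => i _; rewrite !mxE; ring.
Qed.

Lemma norm2_ge0 (R : realType) n (v : 'rV[R]_n) : 0 <= norm2 v.
Proof.
rewrite /norm2 /dotv mxE; apply: sumr_ge0 => i _; rewrite mxE; by rewrite -expr2 sqr_ge0.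
Qed.

Lemma fin_le (R : realType) (e : \bar R) (r : R) : e != -oo%E -> (e <= r%:E)%E ->
  exists r', e = r'%:E.
Proof. by case: e => [r'||] //; eauto. Qed.

Lemma dotv0 (R : realType) n (g : 'rV[R]_n) : dotv g 0 = 0.
Proof. by rewrite /dotv trmx0 mulmx0 mxE. Qed.

Lemma key (R : realType) n m (G : 'I_m -> 'rV[R]_n -> R) gradG
  (H : 'I_m -> 'rV[R]_n -> \bar R) (alpha gamma : R)
  (halpha : 0 < alpha) (hgamma1 : gamma < 2/alpha)
  (hHp : forall j, proper_efun (H j)) (hHconv : forall j, convex_efun (H j))
  (x p : 'rV[R]_n) (t : R) (hx : domF G H x) (hprox : is_prox gradG H alpha x p) (t0 : 0 < t) (t1 : t <= 1)
  (harm : forall j, armijo G gradG gamma j x (p - x) t) : Fle G H (x + t *: (p - x)) x.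
Proof.
move=> j0.
set d := p - x; set D := norm2 d; set c := 1 / (2 * alpha).
have hD : 0 <= D := norm2_ge0 _ _ d.
have hc : 0 < c by rewrite /c divr_gt0 // mulr_gt0.
have hxf : forall i, H i x = (fine (H i x))%:E.
  move=> i; move: (hx i) ((hHp i).1 x); rewrite /Fj; case: (H i x) => [r||] //=.
have hpsixx : (psi gradG H x x <= 0)%E.
  rewrite /psi; apply: bigmax_le => // i _.
  by rewrite subrr dotv0 add0e hxf -EFinB subrr.
have hobjp : (psi gradG H x p + (c * D)%:E <= 0)%E.
  have := hprox x; rewrite /prox_obj subrr /norm2 dotv0 mulr0 adde0 => h.
  exact: le_trans h hpsixx.
have hterm : forall i, ((dotv (gradG i x) d)%:E + H i p - H i x <= psi gradG H x p)%E.
  move=> i; rewrite /psi; exact: (le_bigmax _ (fun i => (dotv (gradG i x) (p - x))%:E + H i p - H i x)%E i).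
have hpsilt : (psi gradG H x p < +oo)%E.
  by move: hobjp; case: (psi gradG H x p) => [r _||] //=; rewrite ltry.
have hpf : forall i, H i p = (fine (H i p))%:E.
  move=> i; have := le_lt_trans (hterm i) hpsilt.
  move: ((hHp i).1 p); rewrite hxf; case: (H i p) => [r||] //=.
have [P hP] : exists P, psi gradG H x p = P%:E.
  move: hpsilt (hterm j0); rewrite hpf hxf -EFinD.
  case: (psi gradG H x p) => [r _ _|//|//]; by exists r.
pose a i := dotv (gradG i x) d + fine (H i p) - fine (H i x).
have haP : forall i, a i <= P.
  by move=> i; have := hterm i; rewrite hP hpf hxf -EFinD lee_fin.
have hP0 : P + c * D <= 0.
  by move: hobjp; rewrite hP -EFinD lee_fin.
have hsc : forall s, 0 < s -> s < 1 -> P <= c * D * (s - 2).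
  move=> s s0 s1.
  set u := s *: x + (1 - s) *: p.
  have hu : u - x = (1 - s) *: d by apply/rowP => k; rewrite !mxE; ring.
  have hpu : (psi gradG H x u <= ((1 - s) * P)%:E)%E.
    rewrite /psi; apply: bigmax_le => [|i _]; first by rewrite leNye.
    rewrite hu dotvZ.
    have hs01 : 0 <= s <= 1 by apply/andP; split; lra.
    have hcv := hHconv i x p s hs01.
    rewrite -/u hxf hpf -!EFinM -EFinD in hcv.
    have [r hr] := fin_le _ _ _ ((hHp i).1 u) hcv.
    rewrite hr lee_fin in hcv; rewrite hr hxf -EFinD lee_fin.
    have := haP i; rewrite /a => hai.
    have h1 : (1 - s) * (dotv (gradG i x) d + fine (H i p) - fine (H i x)) <= (1 - s) * P.
      by apply: ler_wpM2l => //; lra.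
    nra.
  have := hprox u; rewrite /prox_obj hP hu norm2Z -/D => h.
  have h2 := le_trans h (leeD2r _ hpu).
  rewrite -!EFinD lee_fin -/c in h2.
  nra.
have hPb : P <= - (2 * c * D).
  rewrite leNgt; apply/negP => hlt.
  set e := P + 2 * c * D.
  have he : 0 < e by rewrite /e; lra.
  have hcD : 0 <= c * D by apply: mulr_ge0 => //; lra.
  set s := e / (e + c * D + 1).
  have hden : 0 < e + c * D + 1 by lra.
  have s0 : 0 < s by rewrite /s divr_gt0.
  have s1 : s < 1 by rewrite /s ltr_pdivrMr // mul1r; lra.
  have hcs : c * D * s < e.
    rewrite /s mulrA ltr_pdivrMr //; nra.
  have := hsc s s0 s1; rewrite /e in hcs *; nra.
have h2c : 2 * c = alpha^-1 by rewrite /c; field; lra.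
have hga : gamma / 2 <= alpha^-1.
  have : gamma < 2 * alpha^-1 by [].
  lra.
have hgD : gamma / 2 * D <= alpha^-1 * D by apply: ler_wpM2r.
have hxt : x + t *: d = t *: p + (1 - t) *: x by apply/rowP => k; rewrite !mxE; ring.
have ht01 : 0 <= t <= 1 by apply/andP; split; lra.
have hcv := hHconv j0 p x t ht01.
rewrite -hxt hpf hxf -!EFinM -EFinD in hcv.
have [r hr] := fin_le _ _ _ ((hHp j0).1 (x + t *: d)) hcv.
rewrite hr lee_fin in hcv.
rewrite /Fj hr hxf -!EFinD lee_fin.
have harm0 := harm j0; rewrite /armijo -/d -/D in harm0.
have haj := haP j0; rewrite /a in haj.
have hneg : dotv (gradG j0 x) d + fine (H j0 p) - fine (H j0 x) + gamma / 2 * D <= 0.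
  have : 2 * c * D = alpha^-1 * D by rewrite h2c.
  lra.
have ht : t * (dotv (gradG j0 x) d + fine (H j0 p) - fine (H j0 x) + gamma / 2 * D) <= 0.
  by apply: mulr_ge0_le0 => //; lra.
nra.
Qed.

Lemma ls33_ok (R : realType) n m (G : 'I_m -> 'rV[R]_n -> R) gradG (gamma tau1 tau2 : R)
  (htau0 : 0 < tau1) (htau2 : tau2 < 1) (x d : 'rV[R]_n) (t tk : R) :
  ls33 G gradG gamma tau1 tau2 x d t tk -> 0 < t -> t <= 1 ->
  0 < tk /\ tk <= 1 /\ forall j, armijo G gradG gamma j x d tk.
Proof.
elim => {t tk} [t t' /andP[h1 h2] ha|t t' tk /andP[h1 h2] _ _ IH] t0 t1.
- by split; [nra | split; [nra | exact: ha]].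
- by apply: IH; nra.
Qed.

Lemma ls31_ok (R : realType) n m (G : 'I_m -> 'rV[R]_n -> R) gradG H (gamma tau1 tau2 : R)
  (htau0 : 0 < tau1) (htau2 : tau2 < 1) js (x d : 'rV[R]_n) (t tk : R) :
  ls31 G gradG H gamma tau1 tau2 js x d t tk -> 0 < t -> t <= 1 ->
  Fle G H (x + tk *: d) x \/
  (0 < tk /\ tk <= 1 /\ forall j, armijo G gradG gamma j x d tk).
Proof.
elim => {t tk} [t tk _ [[hF ->]|[_ h33]]|t t' tk _ /andP[h1 h2] _ IH] t0 t1.
- by left.
- by right; exact: (@ls33_ok R n m G gradG gamma tau1 tau2 htau0 htau2 x d t tk h33 t0 t1).
- by apply: IH; nra.
Qed.

Lemma step_ok (R : realType) n m (G : 'I_m -> 'rV[R]_n -> R) gradG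
  (H : 'I_m -> 'rV[R]_n -> \bar R) (alpha gamma tau1 tau2 : R)
  (halpha : 0 < alpha) (hgamma1 : gamma < 2/alpha)
  (hHp : forall j, proper_efun (H j)) (hHconv : forall j, convex_efun (H j))
  (htau0 : 0 < tau1) (htau2 : tau2 < 1) (x x' : 'rV[R]_n) :
  domF G H x -> mpg_step G gradG H gamma tau1 tau2 alpha x x' -> Fle G H x' x.
Proof.
move=> hx [p [hp [_ [js [_ [tk [hls ->]]]]]]].
case: (@ls31_ok R n m G gradG H gamma tau1 tau2 htau0 htau2 js x (p - x) 1 tk hls ltr01 (lexx _)) => [//|[t0 [t1 ha]]].
exact: (@key R n m G gradG H alpha gamma halpha hgamma1 hHp hHconv x p tk hx hp t0 t1 ha).
Qed.

Theorem mainTheorem3 (R : realType) (n m : nat)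
  (G : 'I_m -> 'rV[R]_n -> R) (gradG : 'I_m -> 'rV[R]_n -> 'rV[R]_n)
  (H : 'I_m -> 'rV[R]_n -> \bar R)
  (hGd : forall j x, differentiable (G j) x)
  (hGgrad : forall j x v, 'd (G j) x v = dotv (gradG j x) v)
  (hGc : forall j, continuous (gradG j))
  (hGconv : forall j, convex_fun (G j))
  (hHp : forall j, proper_efun (H j))
  (hHconv : forall j, convex_efun (H j))
  (hHc : forall j, {within edom (H j), continuous (fun x => fine (H j x))})
  (hdom0 : domF G H !=set0)
  (hdomc : closed (domF G H))
  (alpha gamma tau1 tau2 : R)
  (halpha : 0 < alpha) (hgamma0 : 0 < gamma) (hgamma1 : gamma < 2 / alpha)
  (htau0 : 0 < tau1) (htau12 : tau1 < tau2) (htau2 : tau2 < 1)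
  (x : nat -> 'rV[R]_n) (K : nat)
  (hgen : mpg_generated G gradG H gamma tau1 tau2 alpha x K) :
  forall k, (k < K)%N -> Fle G H (x k.+1) (x k).
Proof.
case: hgen => hx0 hsteps.
have st := @step_ok R n m G gradG H alpha gamma tau1 tau2 halpha hgamma1 hHp hHconv htau0 htau2.
have hdom : forall k, (k <= K)%N -> domF G H (x k).
  elim => [//|k IH] hk.
  have hF := st _ _ (IH (ltnW hk)) (hsteps k hk).
  by move=> j; exact: le_lt_trans (hF j) (IH (ltnW hk) j).
by move=> k hk; exact: st _ _ (hdom k (ltnW hk)) (hsteps k hk).
Qed.
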